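(* Let $F(\lambda,\mu)=\left(\frac{2\lambda^2}{4-\mu^2},\ \mu+\frac{\mu\lambda^2}{4-\mu^2}\right)$, $\phi(\lambda,\mu)=\frac{4-\lambda^2+\mu^2}{4\mu}$, $\psi(\lambda,\mu)=\frac{4-\mu^2+\lambda^2}{4\lambda}$. Fix $\eta\in\mathbb{C}$ with $\eta^2\neq1$, a square root $s$ of $\eta^2-1$, and let $H_\eta=\{(\lambda,\mu):4-\lambda^2+\mu^2=4\eta\mu\}$. Define $\varphi_\eta\colon H_\eta\dashrightarrow\mathbb{P}^1$ by $$\varphi_\eta(\lambda,\mu)=\frac{2-\lambda-\eta\mu-s\mu}{-2+\lambda+\eta\mu-s\mu}.$$ Then $\varphi_\eta$ is birational from $H_\eta$ to $\mathbb{P}^1$, $F$ maps $H_\eta$ into itself, and for generic $p\in H_\eta$: $$\varphi_\eta(F(p))=\varphi_\eta(p)^2,\qquad \psi(p)=\tfrac12\left(\varphi_\eta(p)+\varphi_\eta(p)^{-1}\right).$$ *)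

(* Defs.v *)
(* The base field is an arbitrary numClosedFieldType C
   (algebraically closed, characteristic 0), which covers C = complex numbers. *)
From HB Require Import structures.
From mathcomp Require Import all_boot all_order all_algebra.
Set Implicit Arguments. Unset Strict Implicit. Unset Printing Implicit Defensive.
Import Order.TTheory GRing.Theory Num.Theory.
Local Open Scope ring_scope.

Section Defs.
Variable C : numClosedFieldType.
Implicit Types (p : C * C) (eta s : C).

(* points p = (lambda, mu) *)
Definition F p : C * C :=
  (2 * p.1 ^+ 2 / (4 - p.2 ^+ 2), p.2 + p.2 * p.1 ^+ 2 / (4 - p.2 ^+ 2)).

Definition phi p : C := (4 - p.1 ^+ 2 + p.2 ^+ 2) / (4 * p.2).
Definition psi p : C := (4 - p.2 ^+ 2 + p.1 ^+ 2) / (4 * p.1).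

Definition onH eta p : Prop := 4 - p.1 ^+ 2 + p.2 ^+ 2 = 4 * eta * p.2.

Definition varphi_num eta s p : C := 2 - p.1 - eta * p.2 - s * p.2.
Definition varphi_den eta s p : C := -2 + p.1 + eta * p.2 - s * p.2.
Definition varphi eta s p : C := varphi_num eta s p / varphi_den eta s p.

(* "P holds for generic p in H_eta": outside a finite set of points of H_eta
   (H_eta is an irreducible curve, so nonempty Zariski opens are cofinite). *)
Definition generic_on_H eta (P : C * C -> Prop) : Prop :=
  exists S : seq (C * C), forall p, onH eta p -> p \notin S -> P p.

(* f = fnum/fden : H_eta --> P^1 is birational: it has a rational inverse
   t |-> (a1(t)/b1(t), a2(t)/b2(t)) : P^1 --> H_eta, the two compositions
   being the identity where defined (generically). P^1 is taken in its
   affine chart t, which is harmless birationally. *)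
Definition birational_H_P1 eta (f fden : C * C -> C) : Prop :=
  exists a1 b1 a2 b2 : {poly C},
    [/\ b1 != 0, b2 != 0,
     generic_on_H eta (fun p =>
        [/\ fden p != 0, b1.[f p] != 0, b2.[f p] != 0 &
            (a1.[f p] / b1.[f p], a2.[f p] / b2.[f p]) = p]) &
     exists T : seq C, forall t, t \notin T ->
        [/\ b1.[t] != 0, b2.[t] != 0,
            onH eta (a1.[t] / b1.[t], a2.[t] / b2.[t]),
            fden (a1.[t] / b1.[t], a2.[t] / b2.[t]) != 0 &
            f (a1.[t] / b1.[t], a2.[t] / b2.[t]) = t]].
End Defs.

(* Main.v *)
Require Import Defs.
From HB Require Import structures.
From mathcomp Require Import all_boot all_order all_algebra.
From mathcomp Require Import ring.
Import Order.TTheory GRing.Theory Num.Theory.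
Local Open Scope ring_scope.

Lemma onH_F (C : numClosedFieldType) (eta : C) p : onH eta p -> 4 - p.2 ^+ 2 != 0 -> onH eta (F p).
Proof.
case: p => x y; rewrite /onH /F /= => H hw.
have -> : 4 * eta * (y + y * x ^+ 2 / (4 - y ^+ 2)) = (4*eta*y) * ((4 - y^+2 + x^+2)/(4 - y^+2)).
  by field.
rewrite -H. by field.
Qed.

Section S.
Variable C : numClosedFieldType.
Variable a : C.
Hypothesis ha0 : a != 0.
Hypothesis ham : a - 1 != 0.
Hypothesis hap : a + 1 != 0.

Definition X (t : C) := 2*(a-1)*(a+1)*t / ((a-t)*(a+t)).
Definition Y (t : C) := 2*a*(1-t)*(1+t) / ((a-t)*(a+t)).
Definition et : C := (a^+2+1)/(2*a).
Definition es : C := (a^+2-1)/(2*a).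

Lemma h2 : (2 : C) != 0. Proof. by rewrite pnatr_eq0. Qed.
Lemma h4 : (4 : C) != 0. Proof. by rewrite pnatr_eq0. Qed.

Ltac nz := repeat (apply/andP; split); rewrite ?h2 ?h4 //.
Ltac nzp := repeat (match goal with
  | |- is_true (_ * _ != 0) => apply: mulf_neq0
  | |- is_true (_ / _ != 0) => apply: mulf_neq0
  | |- is_true (_ ^-1 != 0) => rewrite invr_neq0
  | |- is_true (_ ^+ _ != 0) => apply: expf_neq0
  end); rewrite ?h2 ?h4 //.

Lemma param_props (t : C) : t != 0 -> t - 1 != 0 -> t + 1 != 0 ->
  a - t != 0 -> a + t != 0 -> a - t^+2 != 0 -> a + t^+2 != 0 ->
  [/\ onH et (X t, Y t), varphi_den et es (X t, Y t) != 0,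
      varphi et es (X t, Y t) = t,
      (4 - (Y t)^+2 != 0) && (X t != 0) &
      [/\ varphi_den et es (F (X t, Y t)) != 0,
      varphi et es (F (X t, Y t)) = t^+2 &
      psi (X t, Y t) = (t + t^-1)/2]].
Proof.
move=> ht0 ht1 ht2 ht3 ht4 ht5 ht6.
have eD : varphi_den et es (X t, Y t) = 2*(a-1)*(a+1)*(t-1)/((a-t)*(a+t)).
  rewrite /varphi_den /X /Y /et /es /=. field. nz.
have e4 : 4 - (Y t)^+2 = 4*(a-1)*(a+1)*(a-t^+2)*(a+t^+2)/((a-t)*(a+t))^+2.
  rewrite /Y. field. nz.
have eDF : varphi_den et es (F (X t, Y t)) = 2*(a-1)*(a+1)*(t^+2-1)/((a-t^+2)*(a+t^+2)).
  rewrite /varphi_den /F /= e4 /X /Y /et /es. field. nz.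
have et1 : t^+2 - 1 = (t-1)*(t+1) by ring.
split.
- rewrite /onH /X /Y /et /=. field. nz.
- rewrite eD. nzp.
- rewrite /varphi eD /varphi_num /X /Y /et /es /=. field. nz.
- rewrite e4. apply/andP; split; first by nzp. rewrite /X; nzp.
split.
- rewrite eDF et1; nzp.
- rewrite /varphi eDF /varphi_num /F /= e4 et1 /X /Y /et /es. field. nz.
- rewrite /psi /X /Y /=. field. nz.
Qed.

Lemma inv_param x y : onH et (x,y) -> y != 0 -> varphi_den et es (x,y) != 0 ->
  [/\ a - varphi et es (x,y) != 0, a + varphi et es (x,y) != 0,
      x = X (varphi et es (x,y)) & y = Y (varphi et es (x,y))].
Proof.
move=> H hy hD.
have [k ex] : exists k : C, x = 2 - k*y by exists ((2-x)/y); field.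
subst x. rewrite /onH /= in H.
have e2 : 4*k - k^+2*y + y - 4*et = 0.
  have : y * (4*k - k^+2*y + y - 4*et) = (4 - (2-k*y)^+2 + y^+2) - 4*et*y by ring.
  rewrite H subrr => /eqP; rewrite mulf_eq0 (negbTE hy) /= => /eqP //.
have hk1 : k - 1 != 0.
  apply/eqP => hk. have hk' : k = 1 by apply/eqP; rewrite -subr_eq0 hk.
  have : (a-1)^+2 = -a/2 * (4*k - k^+2*y + y - 4*et) by rewrite hk' /et; field; nz.
  by rewrite e2 mulr0 => /eqP; rewrite expf_eq0 /= (negbTE ham).
have hk2 : k + 1 != 0.
  apply/eqP => hk. have hk' : k = -1 by apply/eqP; rewrite -subr_eq0 opprK hk.
  have : (a+1)^+2 = -a/2 * (4*k - k^+2*y + y - 4*et) by rewrite hk' /et; field; nz.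
  by rewrite e2 mulr0 => /eqP; rewrite expf_eq0 /= (negbTE hap).
have hk3 : 1 - k != 0 by rewrite -opprB oppr_eq0.
have eDp : varphi_den et es (2 - k*y, y) = y*(1 - a*k)/a by rewrite /varphi_den /et /es /=; field; nz.
have hak : 1 - a*k != 0.
  apply/eqP => h. move: hD. rewrite eDp.
  by rewrite h mulr0 mul0r eqxx.
have hnz : (1-k)*(1+k) != 0 by apply: mulf_neq0 => //; rewrite addrC.
have ey : y = (4*et - 4*k)/((1-k)*(1+k)).
  apply: (mulIf hnz); rewrite mulfVK //.
  have : y*((1-k)*(1+k)) - (4*et - 4*k) = 4*k - k^+2*y + y - 4*et by ring.
  by rewrite e2 => /eqP; rewrite subr_eq0 => /eqP.
have -> : varphi et es (2 - k*y, y) = a*(k-a)/(1-a*k).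
  rewrite /varphi eDp /varphi_num /et /es /=; field; nz.
have ham' : 1 - a != 0 by rewrite -opprB oppr_eq0.
have h1k : 1 + k != 0 by rewrite addrC.
have hA : a*(1-a*k) + a*(k-a) != 0.
  have -> : a*(1-a*k) + a*(k-a) = a*(1-a)*(1+k) by ring. by nzp.
have hB : a*(1-a*k) - a*(k-a) != 0.
  have -> : a*(1-a*k) - a*(k-a) = a*(1+a)*(1-k) by ring. by nzp; rewrite addrC.
split.
- have -> : a - a*(k-a)/(1-a*k) = a*(1+a)*(1-k)/(1-a*k) by field.
  by nzp; rewrite addrC.
- have -> : a + a*(k-a)/(1-a*k) = a*(1-a)*(1+k)/(1-a*k) by field.
  by nzp; rewrite addrC.
- rewrite ey /X /et. field. nz.
- apply: (etrans ey). rewrite /Y /et. field. nz.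
Qed.

Definition badt : seq C := [:: a; -a; 0; 1; -1; sqrtC a; - sqrtC a; sqrtC (-a); - sqrtC (-a)].

Lemma good t : t \notin badt ->
  [/\ t != 0, t - 1 != 0, t + 1 != 0, a - t != 0 &
   [/\ a + t != 0, a - t^+2 != 0 & a + t^+2 != 0]].
Proof.
rewrite !inE.
move=> /norP [n1 /norP [n2 /norP [n3 /norP [n4 /norP [n5 /norP [n6 /norP [n7 /norP [n8 n9]]]]]]]].
split => //.
- by rewrite subr_eq0.
- by rewrite addr_eq0.
- by rewrite subr_eq0 eq_sym.
split.
- by rewrite addrC addr_eq0.
- have -> : a - t^+2 = (sqrtC a - t)*(sqrtC a + t) by rewrite -{1}(sqrtCK a); ring.
  by apply: mulf_neq0; [rewrite subr_eq0 eq_sym | rewrite addrC addr_eq0].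
- have -> : a + t^+2 = - ((sqrtC (-a) - t)*(sqrtC (-a) + t)).
    by rewrite -{1}(opprK a) -{1}(sqrtCK (-a)); ring.
  rewrite oppr_eq0.
  by apply: mulf_neq0; [rewrite subr_eq0 eq_sym | rewrite addrC addr_eq0].
Qed.

Definition Sbad : seq (C * C) :=
  [:: (2,0); (-2,0); (0, 2*a)] ++ map (fun t => (X t, Y t)) badt.

Lemma gen_param p : onH et p -> p \notin Sbad ->
  exists t, t \notin badt /\ p = (X t, Y t).
Proof.
case: p => x y H hS.
have hy : y != 0.
  apply/eqP => y0; subst y. move: H; rewrite /onH /=.
  have -> : 4 - x^+2 + 0^+2 = (2 - x)*(2 + x) by ring.
  rewrite !mulr0 => /eqP; rewrite mulf_eq0 => /orP [].
    by rewrite subr_eq0 => /eqP x2; subst x; move: hS; rewrite !inE eqxx.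
  rewrite addr_eq0 => /eqP x2.
  have xm : x = -2 by rewrite x2 opprK.
  by move: hS; rewrite xm !inE eqxx orbT.
have hD : varphi_den et es (x, y) != 0.
  apply/eqP => hD.
  have ex : x = 2 - y/a.
    move: hD; rewrite /varphi_den /es /et /= => /eqP.
    have -> : -2 + x + (a ^+ 2 + 1) / (2 * a) * y - (a ^+ 2 - 1) / (2 * a) * y
       = x - (2 - y/a) by field; nz.
    by rewrite subr_eq0 => /eqP.
  subst x. move: H; rewrite /onH /=.
  have -> : 4 - (2 - y / a) ^+ 2 + y ^+ 2 = 4 * et * y + y*(a-1)*(a+1)*(y - 2*a)/a^+2.
    by rewrite /et; field; nz.
  move=> /(congr1 (fun w => w - 4*et*y)); rewrite /= [4*et*y + _]addrC addrK subrr => /eqP.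
  rewrite !mulf_eq0 invr_eq0 expf_eq0 /= (negbTE hy) (negbTE ham) (negbTE hap) (negbTE ha0) /=.
  rewrite orbF subr_eq0 => /eqP ey; move: hS; rewrite ey.
  by rewrite mulfK // subrr !inE eqxx /= !orbT.
have [h1 h2 ex ey] := @inv_param x y H hy hD.
exists (varphi et es (x, y)); split; last by rewrite -ex -ey.
apply/negP => hb.
have ep : (x, y) = (X (varphi et es (x, y)), Y (varphi et es (x, y))) by rewrite -ex -ey.
have hm : (x, y) \in map (fun t => (X t, Y t)) badt by rewrite {1}ep (map_f _ hb).
by move: hS; rewrite mem_cat hm orbT.
Qed.

Lemma main :
  [/\ birational_H_P1 et (varphi et es) (varphi_den et es),
      (forall p : C * C, onH et p -> 4 - p.2 ^+ 2 != 0 -> onH et (F p)) &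
      generic_on_H et (fun p =>
        [/\ (4 - p.2 ^+ 2 != 0) && (p.1 != 0),
            (varphi_den et es p != 0) && (varphi_den et es (F p) != 0),
            varphi et es p != 0,
            varphi et es (F p) = varphi et es p ^+ 2 &
            psi p = (varphi et es p + (varphi et es p)^-1) / 2])].
Proof.
split.
- pose b1 : {poly C} := (a%:P - 'X) * (a%:P + 'X).
  pose a1 : {poly C} := (2*(a-1)*(a+1))%:P * 'X.
  pose a2 : {poly C} := (2*a)%:P * ((1 - 'X) * (1 + 'X)).
  have eb t : b1.[t] = (a - t)*(a + t) by rewrite /b1 !hornerE.
  have eX t : a1.[t] / b1.[t] = X t by rewrite eb /a1 /X !hornerE.
  have eY t : a2.[t] / b1.[t] = Y t by rewrite eb /a2 /Y !hornerE.
  have hb1 : b1 != 0.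
    apply/negP => /eqP hb. have := eb 0. rewrite hb horner0 subr0 addr0 => /eqP.
    by rewrite eq_sym mulf_eq0 orbb (negbTE ha0).
  exists a1, b1, a2, b1; split => //.
  + exists Sbad => p H hS. have [t [ht ->]] := @gen_param p H hS.
    have [g1 g2 g3 g4 [g5 g6 g7]] := @good t ht.
    have [q1 q2 q3 q4 [q5 q6 q7]] := @param_props t g1 g2 g3 g4 g5 g6 g7.
    rewrite q3 eX eY eb; split => //; exact: mulf_neq0.
  + exists badt => t ht.
    have [g1 g2 g3 g4 [g5 g6 g7]] := @good t ht.
    have [q1 q2 q3 q4 [q5 q6 q7]] := @param_props t g1 g2 g3 g4 g5 g6 g7.
    rewrite eX eY eb; split => //; exact: mulf_neq0.
- by move=> p; apply: onH_F.
- exists Sbad => p H hS. have [t [ht ->]] := @gen_param p H hS.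
  have [g1 g2 g3 g4 [g5 g6 g7]] := @good t ht.
  have [q1 q2 q3 q4 [q5 q6 q7]] := @param_props t g1 g2 g3 g4 g5 g6 g7.
  by rewrite q3 q6 q7 q2 q5; split.
Qed.
End S.



Theorem lemma5p7 (C : numClosedFieldType) (eta s : C)
    (heta : eta ^+ 2 != 1) (hs : s ^+ 2 = eta ^+ 2 - 1) :
  [/\ birational_H_P1 eta (varphi eta s) (varphi_den eta s),
      (forall p : C * C, onH eta p -> 4 - p.2 ^+ 2 != 0 -> onH eta (F p)) &
      generic_on_H eta (fun p =>
        [/\ (4 - p.2 ^+ 2 != 0) && (p.1 != 0),
            (varphi_den eta s p != 0) && (varphi_den eta s (F p) != 0),
            varphi eta s p != 0,
            varphi eta s (F p) = varphi eta s p ^+ 2 &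
            psi p = (varphi eta s p + (varphi eta s p)^-1) / 2])].
Proof.
have e1 : (eta+s)*(eta-s) = 1.
  have -> : (eta+s)*(eta-s) = eta^+2 - s^+2 by ring.
  rewrite hs; ring.
have ha0 : eta + s != 0.
  by apply/eqP => h; move: e1; rewrite h mul0r => /eqP; rewrite eq_sym oner_eq0.
have hs0 : s != 0.
  apply/eqP => h; move: hs; rewrite h expr2 mulr0 => /eqP.
  by rewrite eq_sym subr_eq0 (negbTE heta).
have h2 : (2 : C) != 0 by rewrite pnatr_eq0.
have [a [ea ha eeta ees]] : exists a : C,
    [/\ a = eta + s, a != 0, eta = (a^+2+1)/(2*a) & s = (a^+2-1)/(2*a)].
  exists (eta + s); split => //.
  - have h : (eta+s)^+2 + (eta+s)*(eta-s) = (eta+s)*(2*eta) by ring.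
    rewrite e1 in h. rewrite h. by field.
  - have h : (eta+s)^+2 - (eta+s)*(eta-s) = (eta+s)*(2*s) by ring.
    rewrite e1 in h. rewrite h. by field.
have ham : a - 1 != 0.
  apply/eqP => h; have a1 : a = 1 by apply/eqP; rewrite -subr_eq0 h.
  by move: hs0; rewrite ees a1 expr1n subrr mul0r eqxx.
have hap : a + 1 != 0.
  apply/eqP => h; have a1 : a = -1 by apply/eqP; rewrite -subr_eq0 opprK h.
  by move: hs0; rewrite ees a1 sqrrN expr1n subrr mul0r eqxx.
rewrite eeta ees.
exact: (@main C a ha ham hap).
Qed.
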